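(* For $\epsilon\in[0,1)$ define sequences $\{p_j(\epsilon)\}_{j\in\mathbb N}$ and $\{p'_j(\epsilon)\}_{j\in\mathbb N}$ by $p_1(\epsilon)=2+\epsilon$, $p'_1(\epsilon)=1+\epsilon$, $p_{j+1}(\epsilon)=2+\epsilon-1/p_j(\epsilon)$, $p'_{j+1}(\epsilon)=2+\epsilon-1/p'_j(\epsilon)$, and let $p_+(\epsilon)=1+\epsilon/2+\sqrt{\epsilon+\epsilon^2/4}$. For $l\in\mathbb N$ let $M(l)$ be the $l\times l$ matrix with entries $2\delta_{i_1i_2}-1_{\{|i_1-i_2|=1\}}$ and $I_l$ the identity. Then: 1. $1\le p'_j(\epsilon)\le p_+(\epsilon)<p_j(\epsilon)\le1+1/j+j\epsilon$ for all $j\in\mathbb N$; $\{p_j(\epsilon)\}_j$ is monotone decreasing and $\{p'_j(\epsilon)\}_j$ is monotone nondecreasing. 2. For every $l\in\mathbb N$, the sequence $\{((\epsilon I_l+M(l))^{-1})_{kk}\}_{k=1}^{[l/2]}$ is monotone increasing. 3. For $j\ge2$, $p_j(\epsilon)-p_+(\epsilon)\le(1+\sqrt\epsilon)^{-(j-2)}$ and $p_+(\epsilon)-p'_j(\epsilon)\le\sqrt\epsilon(1+\sqrt\epsilon)^{-(j-2)}$. 4. For every $k\ge2$, $\prod_{j=1}^kp'_j(\epsilon)=(p_k(\epsilon)-1)\prod_{j=1}^{k-1}p_j(\epsilon)$. *)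

(* Defs.v *)
From HB Require Import structures.
From mathcomp Require Import all_boot all_order all_algebra.
From mathcomp Require Import reals.
Set Implicit Arguments. Unset Strict Implicit. Unset Printing Implicit Defensive.
Import Order.TTheory GRing.Theory Num.Theory.
Local Open Scope ring_scope.

(* p_aux eps n = p_{n+1}(eps): p_1 = 2+eps, p_{j+1} = 2+eps - 1/p_j *)
Fixpoint p_aux (R : realType) (eps : R) (n : nat) : R :=
  match n with
  | 0 => 2 + eps
  | n'.+1 => 2 + eps - (p_aux eps n')^-1
  end.

(* p'_aux eps n = p'_{n+1}(eps): p'_1 = 1+eps, p'_{j+1} = 2+eps - 1/p'_j *)
Fixpoint p'_aux (R : realType) (eps : R) (n : nat) : R :=
  match n with
  | 0 => 1 + eps
  | n'.+1 => 2 + eps - (p'_aux eps n')^-1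
  end.

(* 1-based indexing: p eps j = p_j(eps) for j >= 1 (value at j = 0 is junk) *)
Definition p (R : realType) (eps : R) (j : nat) : R := p_aux eps j.-1.
Definition p' (R : realType) (eps : R) (j : nat) : R := p'_aux eps j.-1.

Definition p_plus (R : realType) (eps : R) : R :=
  1 + eps / 2 + Num.sqrt (eps + eps ^+ 2 / 4).

Definition Mmat (R : realType) (l : nat) : 'M[R]_l :=
  \matrix_(i1 < l, i2 < l)
    ((2 * (i1 == i2)%:R) - ((`|(i1 : int) - (i2 : int)|%N == 1%N)%:R)).

(* Main.v *)
Require Import Defs.
From HB Require Import structures.
From mathcomp Require Import all_boot all_order all_algebra.
From mathcomp Require Import reals.
From mathcomp Require Import ring lra zify.
Import Order.TTheory GRing.Theory Num.Theory.
Local Open Scope ring_scope.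


Fixpoint Tn {R : realType} (c : R) (n : nat) : R :=
  match n with
  | 0 => 0
  | n'.+1 => match n' with 0 => 1 | n''.+1 => c * Tn c n' - Tn c n'' end
  end.

Arguments Tn {R} c n : simpl never.
Section T.
Variables (R : realType) (c : R).
Hypothesis hc : 2 <= c.

Lemma TnSS n : Tn c n.+2 = c * Tn c n.+1 - Tn c n.
Proof. by []. Qed.
Lemma Tn0 : Tn c 0 = 0. Proof. by []. Qed.
Lemma Tn1 : Tn c 1 = 1. Proof. by []. Qed.

Lemma Tpos n : 0 <= Tn c n /\ Tn c n + 1 <= Tn c n.+1.
Proof.
elim: n => [|n [h1 h2]]; first by rewrite Tn0 Tn1; split; lra.
have h3 : 0 <= Tn c n.+1 by lra.
have h4 : 2 * Tn c n.+1 <= c * Tn c n.+1 by rewrite ler_wpM2r.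
split; first lra.
rewrite TnSS; lra.
Qed.

Lemma Tgt0 n : 0 < Tn c n.+1.
Proof. have [h1 h2] := Tpos n; lra. Qed.

Lemma Tge1 n : 1 <= Tn c n.+1.
Proof. have [h1 h2] := Tpos n; lra. Qed.

Lemma Sge1 n : 1 <= Tn c n.+1 - Tn c n.
Proof. have [h1 h2] := Tpos n; lra. Qed.

Lemma TidG a d : Tn c a.+1 * Tn c (a + d).+1 - Tn c a * Tn c (a + d).+2 = Tn c d.+1.
Proof.
elim: a => [|a IH]; first by rewrite add0n Tn0 Tn1; ring.
rewrite addSn TnSS [Tn c (a+d).+3]TnSS -IH; ring.
Qed.

Lemma TidF x y : Tn c x.+1 * Tn c y.+1 - Tn c x * Tn c y = Tn c (x + y).+1.
Proof.
elim: x y => [|x IH] y; first by rewrite add0n Tn0 Tn1; ring.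
rewrite addSn -addnS -IH TnSS TnSS; ring.
Qed.
End T.


Lemma sum_ind1 (R : realType) (F : nat -> R) (m l : nat) :
  \sum_(0 <= j < l) (j == m)%:R * F j = (m < l)%:R * F m.
Proof.
elim: l => [|l IH]; first by rewrite big_geq // mul0r.
rewrite big_nat_recr //= IH.
case: (ltngtP m l) => h.
- have -> : (m < l.+1)%N by lia. by rewrite /= mul0r addr0.
- have -> : (m < l.+1)%N = false by lia. by rewrite /= !mul0r addr0.
- by subst; rewrite ltnSn /= mul0r add0r.
Qed.

Lemma Aentry (R : realType) (eps : R) l (i j : 'I_l) :
  (eps%:M + Mmat R l) i j = (2 + eps) * (j == i :> nat)%:R - (j == i.+1 :> nat)%:R
     - ((0 < i)%N && (j == i.-1 :> nat))%:R.
Proof.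
rewrite !mxE distn_eq1 [(j == i :> nat)]eq_sym -[(i == j)]/(val i == val j).
case: (ltngtP i j) => h.
- rewrite [(i.+1 == j)]eq_sym.
  have -> : (0 < i)%N && (j == i.-1 :> nat) = false by apply/negbTE/negP; lia.
  rewrite /= ?mulr0n ?mulr1n ?mulr0 ?mulr1; lra.
- have -> : (j == i.+1 :> nat) = false by apply/negbTE/negP; lia.
  have -> : (i == j.+1 :> nat) = (0 < i)%N && (j == i.-1 :> nat).
    by apply/eqP/andP; [move=> ->|case=> ? /eqP ->]; lia.
  rewrite /= ?mulr0n ?mulr1n ?mulr0 ?mulr1; lra.
- have -> : (j == i.+1 :> nat) = false by apply/negbTE/negP; lia.
  have -> : (i == j.+1 :> nat) = false by apply/negbTE/negP; lia.
  have -> : (0 < i)%N && (j == i.-1 :> nat) = false by apply/negbTE/negP; lia.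
  rewrite /= ?mulr0n ?mulr1n ?mulr0 ?mulr1; lra.
Qed.

Lemma rowsum (R : realType) (eps : R) l (i : 'I_l) (F : nat -> R) :
  \sum_(j < l) (eps%:M + Mmat R l) i j * F j =
  (2 + eps) * F i - (i.+1 < l)%:R * F i.+1 - (0 < i)%:R * F i.-1.
Proof.
have i_lt := ltn_ord i.
transitivity (\sum_(0 <= j < l) ((2 + eps) * ((j == i)%:R * F j) - (j == i.+1)%:R * F j
    - (0 < i)%:R * ((j == i.-1)%:R * F j))).
  rewrite big_mkord; apply: eq_bigr => j _; rewrite Aentry.
  case: (0 < i)%N => /=; ring.
rewrite !sumrB -!mulr_sumr !sum_ind1 i_lt.
have -> : (i.-1 < l)%N by lia.
rewrite /=; ring.
Qed.

Definition Bmx (R : realType) (c : R) l : 'M[R]_l :=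
  \matrix_(i < l, j < l) (Tn c (minn i j).+1 * Tn c (l - maxn i j) / Tn c l.+1).

Lemma AB (R : realType) (eps : R) l : 0 <= eps ->
  (eps%:M + Mmat R l) *m Bmx R (2 + eps) l = 1%:M.
Proof.
move=> he; set c := 2 + eps.
have hc : 2 <= c by rewrite /c; lra.
have D0 : Tn c l.+1 != 0 by have := Tgt0 _ _ hc l; rewrite lt0r => /andP[].
apply/matrixP => i k; rewrite !mxE.
under eq_bigr => j _ do rewrite [Bmx _ _ _ _ _]mxE.
rewrite (@rowsum R eps l i (fun a => Tn c (minn a k).+1 * Tn c (l - maxn a k) / Tn c l.+1)).
have il := ltn_ord i; have kl := ltn_ord k.
have -> : (i.+1 < l)%:R * (Tn c (minn i.+1 k).+1 * Tn c (l - maxn i.+1 k) / Tn c l.+1)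
    = Tn c (minn i.+1 k).+1 * Tn c (l - maxn i.+1 k) / Tn c l.+1.
  case: ltnP => h; first by rewrite mul1r.
  have -> : (l - maxn i.+1 k = 0)%N by lia.
  by rewrite Tn0 mulr0 mul0r mul0r.
have -> : (0 < i)%:R * (Tn c (minn i.-1 k).+1 * Tn c (l - maxn i.-1 k) / Tn c l.+1)
    = Tn c (minn i k.+1) * Tn c (l - maxn i.-1 k) / Tn c l.+1.
  case: (posnP i) => h.
    have -> : minn i k.+1 = 0%N by lia.
    by rewrite h /= Tn0 !mul0r.
  rewrite /= mul1r; congr (Tn c _ * _ / _); lia.
rewrite -[(i == k)%:R](mulfK D0).
have -> : (i == k)%:R * Tn c l.+1 =
  c * (Tn c (minn i k).+1 * Tn c (l - maxn i k)) - Tn c (minn i.+1 k).+1 * Tn c (l - maxn i.+1 k)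
  - Tn c (minn i k.+1) * Tn c (l - maxn i.-1 k).
  have -> : (i == k) = (i == k :> nat) by [].
  have : (i < k)%N \/ (k < i)%N \/ (i : nat) = k by lia.
  case=> [h|[h|h]].
  - have -> : minn i k = i by lia.
    have -> : maxn i k = k by lia.
    have -> : minn i.+1 k = i.+1 by lia.
    have -> : maxn i.+1 k = k by lia.
    have -> : minn i k.+1 = i by lia.
    have -> : maxn i.-1 k = k by lia.
    have -> : (i == k :> nat) = false by apply/eqP; lia.
    rewrite TnSS /=; ring.
  - have -> : minn i k = k by lia.
    have -> : minn i.+1 k = k by lia.
    have -> : minn i k.+1 = k.+1 by lia.
    have -> : maxn i k = i by lia.
    have -> : maxn i.+1 k = i.+1 by lia.
    have -> : maxn i.-1 k = i.-1 by lia.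
    have -> : (i == k :> nat) = false by apply/eqP; lia.
    have -> : (l - i = (l - i.+1).+1)%N by lia.
    have -> : (l - i.-1 = (l - i.+1).+2)%N by lia.
    rewrite TnSS /=; ring.
  - have -> : minn i k = k by lia.
    have -> : minn i.+1 k = k by lia.
    have -> : minn i k.+1 = k by lia.
    have -> : maxn i k = k by lia.
    have -> : maxn i.+1 k = k.+1 by lia.
    have -> : maxn i.-1 k = k by lia.
    rewrite h eqxx.
    have -> : (l - k = (l - k.+1).+1)%N by lia.
    have -> : Tn c l.+1 = Tn c (k + (l - k.+1).+1).+1 by congr (Tn c _); lia.
    rewrite -(TidF R c k (l - k.+1).+1) TnSS /=; ring.
rewrite /c; field; exact: D0.
Qed.

Lemma part2 (R : realType) (eps : R) : 0 <= eps ->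
  forall (l : nat) (i1 i2 : 'I_l), (i1 < i2)%N -> (i2 < l./2)%N ->
        (invmx (eps%:M + Mmat R l)) i1 i1 < (invmx (eps%:M + Mmat R l)) i2 i2.
Proof.
move=> he l i1 i2 h12 h2.
set c := 2 + eps.
have hc : 2 <= c by rewrite /c; lra.
have hAB := AB R eps l he.
have [uA _] := mulmx1_unit hAB.
have -> : invmx (eps%:M + Mmat R l) = Bmx R c l.
  by rewrite -[invmx _]mulmx1 -hAB mulmxA mulVmx // mul1mx.
rewrite !mxE !minnn !maxnn.
have Dp := Tgt0 _ _ hc l.
rewrite ltr_pM2r ?invr_gt0 //.
set f := fun n => Tn c n.+1 * Tn c (l - n).
have step : forall n, (n.+1 < l./2)%N -> f n < f n.+1.
  move=> n hn; rewrite /f.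
  have := TidG R c n.+1 (l - n.*2 - 3).
  have -> : (n.+1 + (l - n.*2 - 3)).+1 = (l - n.+1)%N by lia.
  have -> : (l - n.+1).+1 = (l - n)%N by lia.
  have := Tgt0 _ _ hc (l - n.*2 - 3).
  lra.
have gen : forall d n, (n + d.+1 < l./2)%N -> f n < f (n + d.+1)%N.
  elim=> [|d IH] n hn; first by rewrite addn1; apply: (step n); lia.
  apply: (lt_trans (IH n _)); first lia.
  have -> : (n + d.+2 = (n + d.+1).+1)%N by lia.
  apply: step; lia.
have := gen (i2 - i1.+1)%N i1.
have -> : (i1 + (i2 - i1.+1).+1 = i2)%N by lia.
by move=> /(_ h2).
Qed.


Lemma helper (R : realType) (a b t : R) : 0 < t -> 1 <= a -> a <= b -> t <= b ->
  (a^-1 - b^-1) * t <= b - a.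
Proof.
move=> ht ha hab htb.
have a0 : a != 0 by apply/eqP; lra.
have b0 : b != 0 by apply/eqP; lra.
have -> : a^-1 - b^-1 = (b - a) / (a * b) by field; apply/andP.
have hab0 : 0 < a * b by apply: mulr_gt0; lra.
rewrite mulrAC ler_pdivrMr //.
have : t <= a * b by nra.
nra.
Qed.

Lemma ub_aux (R : realType) (m e : R) : 1 <= m -> 0 <= e ->
  2 + e - (1 + m^-1 + m * e)^-1 <= 1 + (m + 1)^-1 + (m + 1) * e.
Proof.
move=> hm he.
set D := m + 1 + m * m * e.
have D0 : 0 < D by rewrite /D; nra.
have hB : (1 + m^-1 + m * e)^-1 = m / D.
  rewrite /D; field; apply/andP; split; apply/eqP; nra.
set v := (m + 1)^-1.
have hv : v * (m + 1) = 1 by rewrite mulVf //; apply/eqP; lra.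
have v0 : 0 < v by rewrite invr_gt0; lra.
have v1 : v * m * m <= m + 1.
  have : v * (m * m) <= v * ((m + 1) * (m + 1)) by apply: ler_wpM2l; [lra|nra].
  have e1 : v * ((m + 1) * (m + 1)) = m + 1 by rewrite mulrA hv mul1r.
  have e2 : v * m * m = v * (m * m) by rewrite mulrA.
  lra.
have h1 : (m * v - m * e) * D <= m.
  have me0 : 0 <= m * e by nra.
  have k1 : (v * m * m) * (m * e) <= (m + 1) * (m * e) by apply: ler_wpM2r.
  have k2 : 0 <= m * e * (m * m * e) by apply: mulr_ge0 => //; rewrite -mulrA; apply: mulr_ge0 => //; lra.
  have k3 : m * v * (m + 1) = m by rewrite -mulrA hv mulr1.
  rewrite /D.
  have -> : (m * v - m * e) * (m + 1 + m * m * e) = m * v * (m + 1) + (v * m * m) * (m * e) - (m + 1) * (m * e) - m * e * (m * m * e) by ring.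
  lra.
have h2 : m * v - m * e <= m / D by rewrite ler_pdivlMr.
rewrite hB. nra.
Qed.

Lemma parts (R : realType) (eps : R) (heps0 : 0 <= eps) (heps1 : eps < 1) :
  ((forall j : nat, (0 < j)%N ->
      1 <= p' eps j /\ p' eps j <= p_plus eps /\ p_plus eps < p eps j /\
      p eps j <= 1 + (j%:R)^-1 + j%:R * eps)
   /\ (forall j : nat, (0 < j)%N -> p eps j.+1 < p eps j)
   /\ (forall j : nat, (0 < j)%N -> p' eps j <= p' eps j.+1))
  /\ (forall j : nat, (2 <= j)%N ->
        p eps j - p_plus eps <= ((1 + Num.sqrt eps) ^+ (j - 2))^-1 /\
        p_plus eps - p' eps j <= Num.sqrt eps * ((1 + Num.sqrt eps) ^+ (j - 2))^-1)
  /\ (forall k : nat, (2 <= k)%N ->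
        \prod_(1 <= j < k.+1) p' eps j = (p eps k - 1) * \prod_(1 <= j < k) p eps j).
Proof.
set r := Num.sqrt eps.
set s := Num.sqrt (eps + eps ^+ 2 / 4).
set x := p_plus eps.
have xE : x = 1 + eps / 2 + s by [].
have r0 : 0 <= r by exact: sqrtr_ge0.
have r2 : r * r = eps by rewrite -expr2; exact: sqr_sqrtr.
have s0 : 0 <= s by exact: sqrtr_ge0.
have s2 : s * s = eps + eps ^+ 2 / 4.
  rewrite -expr2; apply: sqr_sqrtr; have : 0 <= eps ^+ 2 by rewrite sqr_ge0. lra.
have e2 : eps ^+ 2 = eps * eps by rewrite expr2.
rewrite e2 in s2.
have s_ge_r : r <= s by nra.
have s_ge_e : eps / 2 <= s by nra.
have s_le : s <= r + eps / 2 by nra.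
have s_lt : s < 1 + eps / 2 by nra.
have x_ge : 1 + r <= x by rewrite xE; lra.
have x_gt0 : 0 < x by lra.
have x_fix : 2 + eps - x^-1 = x.
  have x0 : x != 0 by rewrite gt_eqF.
  apply: (mulIf x0); rewrite mulrBl mulVf // xE.
  rewrite !mulrDl !mulrDr. nra.
have pa_gt : forall n, x < p_aux eps n.
  elim=> [|n IH] /=; first by rewrite xE; lra.
  have : (p_aux eps n)^-1 < x^-1 by rewrite ltf_pV2 // posrE; lra.
  lra.
have pa'_le : forall n, p'_aux eps n <= x /\ 1 <= p'_aux eps n /\ p'_aux eps n <= p'_aux eps n.+1.
  elim=> [|n [IH1 [IH2 IH3]]] /=.
    have : (1 + eps)^-1 <= 1 by rewrite invf_le1; lra.
    rewrite xE; lra.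
  move: IH3 => /= IH3.
  have h1 : x^-1 <= (p'_aux eps n)^-1 by rewrite lef_pV2 // posrE; lra.
  have h2 : (2 + eps - (p'_aux eps n)^-1)^-1 <= (p'_aux eps n)^-1.
    by rewrite lef_pV2 // posrE; lra.
  lra.
have pa_dec : forall n, p_aux eps n.+1 < p_aux eps n.
  elim=> [|n IH] /=.
    have : 0 < (2 + eps)^-1 by rewrite invr_gt0; lra.
    lra.
  move: IH => /= IH.
  have : (p_aux eps n)^-1 < (2 + eps - (p_aux eps n)^-1)^-1.
    rewrite ltf_pV2 // posrE; have := pa_gt n; have := pa_gt n.+1 => /=; lra.
  lra.
have pa_ub : forall n, p_aux eps n <= 1 + ((n.+1)%:R)^-1 + (n.+1)%:R * eps.
  elim=> [|n IH] /=; first by rewrite invr1 mul1r; lra.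
  have hm : 1 <= (n.+1)%:R :> R by rewrite ler1n.
  have hp : 0 < p_aux eps n by have := pa_gt n; lra.
  have h1 : (1 + ((n.+1)%:R)^-1 + (n.+1)%:R * eps)^-1 <= (p_aux eps n)^-1.
    have : 0 < ((n.+1)%:R : R)^-1 by rewrite invr_gt0; lra.
    have : 0 <= (n.+1)%:R * eps :> R by apply: mulr_ge0 => //; lra.
    move=> ha hb; rewrite lef_pV2 ?posrE //.
    apply: (@lt_le_trans _ _ (1 + ((n.+1)%:R)^-1)); last by rewrite lerDl.
    by apply: addr_gt0.
  have := @ub_aux R _ _ hm heps0.
  have -> : (n.+2)%:R = (n.+1)%:R + 1 :> R by rewrite -addn1 natrD.
  move=> hub.
  have : 0 <= (p_aux eps n)^-1 - (1 + ((n.+1)%:R)^-1 + (n.+1)%:R * eps)^-1 by lra.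
  lra.
have G : forall n, (p_aux eps n - x) * (1 + r) ^+ n <= 1 + r.
  elim=> [|n IH] /=; first by rewrite expr0 mulr1 xE; lra.
  have e1 : 2 + eps - (p_aux eps n)^-1 - x = x^-1 - (p_aux eps n)^-1 by lra.
  rewrite e1 exprS mulrA.
  have hh' : (x^-1 - (p_aux eps n)^-1) * (1 + r) <= p_aux eps n - x.
    have := pa_gt n; move=> ?; apply: helper; lra.
  apply: le_trans IH; apply: ler_wpM2r => //.
  by apply: exprn_ge0; lra.
have H : forall n, (x - p'_aux eps n) * (1 + r) ^+ n <= r.
  elim=> [|n IH] /=; first by rewrite expr0 mulr1 xE; lra.
  have e1 : x - (2 + eps - (p'_aux eps n)^-1) = (p'_aux eps n)^-1 - x^-1 by lra.
  rewrite e1 exprS mulrA.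
  have [h1 [h2 _]] := pa'_le n.
  have hh' : ((p'_aux eps n)^-1 - x^-1) * (1 + r) <= x - p'_aux eps n.
    by apply: helper; lra.
  apply: le_trans IH; apply: ler_wpM2r => //.
  by apply: exprn_ge0; lra.
have hc : 2 <= 2 + eps by lra.
have Tnz : forall n, Tn (2 + eps) n.+1 != 0.
  by move=> n; have := Tgt0 _ _ hc n; rewrite lt0r => /andP[].
have Snz : forall n, Tn (2 + eps) n.+1 - Tn (2 + eps) n != 0.
  by move=> n; apply/eqP; have := Sge1 _ _ hc n; lra.
have pT : forall n, p_aux eps n = Tn (2 + eps) n.+2 / Tn (2 + eps) n.+1.
  elim=> [|n IH] /=; first by rewrite TnSS Tn1 Tn0 divr1; ring.
  rewrite IH invf_div [Tn _ n.+3]TnSS.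
  by field; apply: Tnz.
have p'T : forall n, p'_aux eps n = (Tn (2 + eps) n.+2 - Tn (2 + eps) n.+1)
     / (Tn (2 + eps) n.+1 - Tn (2 + eps) n).
  elim=> [|n IH] /=; first by rewrite TnSS Tn1 Tn0; field.
  rewrite IH invf_div [Tn _ n.+3]TnSS.
  have e : Tn (2 + eps) n = (2 + eps) * Tn (2 + eps) n.+1 - Tn (2 + eps) n.+2 by rewrite TnSS; ring.
  rewrite e; field; apply: Snz.
have prod_p : forall n, \prod_(1 <= j < n.+1) p eps j = Tn (2 + eps) n.+1.
  elim=> [|n IH]; first by rewrite big_geq // Tn1.
  rewrite big_nat_recr //= IH /p /= pT.
  by field; apply: Tnz.
have prod_p' : forall n, \prod_(1 <= j < n.+1) p' eps j = Tn (2 + eps) n.+1 - Tn (2 + eps) n.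
  elim=> [|n IH]; first by rewrite big_geq // Tn1 Tn0 subr0.
  rewrite big_nat_recr //= IH /p' /= p'T.
  by field; apply: Snz.
split; [split; [|split]|split].
- case=> // n _; rewrite /p /p' /=.
  have [h1 [h2 _]] := pa'_le n.
  by split; [|split; [|split]] => //; apply: pa_ub.
- by case=> // n _; rewrite /p /=; apply: pa_dec.
- by case=> // n _; rewrite /p' /=; have [_ [_ h]] := pa'_le n.
- case=> [|[|n]] // _.
  have -> : (n.+2 - 2 = n)%N by lia.
  rewrite /p /p' /=.
  have pw0 : 0 < (1 + r) ^+ n by apply: exprn_gt0; lra.
  split.
    rewrite -[((1 + r) ^+ n)^-1]div1r ler_pdivlMr //.
    have := G n.+1; rewrite exprS /= => hG.
    rewrite -(ler_pM2r (_ : 0 < 1 + r)); last by lra.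
    by rewrite mul1r -mulrA [_ ^+ n * _]mulrC.
  rewrite -[r * _]/(r / (1 + r) ^+ n) ler_pdivlMr //.
  have := H n.+1; rewrite exprS /= => hH.
  have [h1 _] := pa'_le n.+1.
  have q0 : 0 <= (x - p'_aux eps n.+1) * (1 + r) ^+ n by apply: mulr_ge0; lra.
  have : (x - p'_aux eps n.+1) * (1 + r) ^+ n * (1 + r) <= r.
    by rewrite -mulrA [_ ^+ n * _]mulrC.
  nra.
- case=> [|[|n]] // _.
  rewrite prod_p' prod_p /p /= pT.
  rewrite invf_div [Tn _ n.+3]TnSS; field; apply: Tnz.
Qed.

Theorem lemma1 (R : realType) (eps : R) (heps0 : 0 <= eps) (heps1 : eps < 1) :
  (* 1. *)
  ((forall j : nat, (0 < j)%N ->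
      1 <= p' eps j /\ p' eps j <= p_plus eps /\ p_plus eps < p eps j /\
      p eps j <= 1 + (j%:R)^-1 + j%:R * eps)
   /\ (forall j : nat, (0 < j)%N -> p eps j.+1 < p eps j)
   /\ (forall j : nat, (0 < j)%N -> p' eps j <= p' eps j.+1))
  (* 2. k ranges over 1..[l/2]; ordinal i corresponds to k = i+1 *)
  /\ (forall (l : nat) (i1 i2 : 'I_l), (i1 < i2)%N -> (i2 < l./2)%N ->
        (invmx (eps%:M + Mmat R l)) i1 i1 < (invmx (eps%:M + Mmat R l)) i2 i2)
  (* 3. *)
  /\ (forall j : nat, (2 <= j)%N ->
        p eps j - p_plus eps <= ((1 + Num.sqrt eps) ^+ (j - 2))^-1 /\
        p_plus eps - p' eps j <= Num.sqrt eps * ((1 + Num.sqrt eps) ^+ (j - 2))^-1)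
  (* 4. *)
  /\ (forall k : nat, (2 <= k)%N ->
        \prod_(1 <= j < k.+1) p' eps j = (p eps k - 1) * \prod_(1 <= j < k) p eps j).

Proof.
have [P1 [P3 P4]] := parts R eps heps0 heps1.
split; first exact: P1.
split; first exact: (part2 R eps heps0).
by split.
Qed.
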